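(* For all coinitial CCSK transitions $t,u$: $t,u$ are directly key independent if and only if $t\mathrel\iota u$.
   Context: Names $\mathsf N$ with bijection $\overline\cdot$ onto disjoint co-names; $\mathsf L=\mathsf N\cup\overline{\mathsf N}\cup\{\tau\}$ ($\alpha,\beta$ over $\mathsf L$, $\lambda$ over $\mathsf L\setminus\{\tau\}$); keys $\mathsf K$ denumerable. CCSK processes $X::=\mathbf 0\mid\alpha.X\mid X\backslash\lambda\mid X+Y\mid X|Y\mid\alpha[k].X$; $\mathrm{keys}(X)$ keys in $X$. Directions $D\in\{\mathrm L,\mathrm R\}$, $\bar{\mathrm L}=\mathrm R$, $\bar{\mathrm R}=\mathrm L$. Proof keyed labels $\theta::=\upsilon\alpha[k]\mid\upsilon\langle\upsilon_1\lambda[k],\upsilon_2\overline\lambda[k]\rangle$ ($\upsilon,\upsilon_i\in\{|_{\mathrm L},|_{\mathrm R},+_{\mathrm L},+_{\mathrm R}\}^*$), $\ell(\upsilon\alpha[k])=\alpha$, $\ell(\upsilon\langle\cdots\rangle)=\tau$, $\mathrm{key}(\theta)=k$. Forward CCSK$^{\mathrm P}$ transitions: least relation closed under (act) $\alpha.X\xrightarrow{\alpha[k]}\alpha[k].X$ if $\mathrm{keys}(X)=\emptyset$; (pre) $X\xrightarrow\theta X',\mathrm{key}(\theta)\ne k\Rightarrow\alpha[k].X\xrightarrow\theta\alpha[k].X'$; (res) $X\xrightarrow\theta X',\ell(\theta)\notin\{\lambda,\overline\lambda\}\Rightarrow X\backslash\lambda\xrightarrow\theta X'\backslash\lambda$;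 (par) $X\xrightarrow\theta X',\mathrm{key}(\theta)\notin\mathrm{keys}(Y)\Rightarrow X|Y\xrightarrow{|_{\mathrm L}\theta}X'|Y$, $Y|X\xrightarrow{|_{\mathrm R}\theta}Y|X'$; (syn) $X\xrightarrow{\upsilon_1\lambda[k]}X',Y\xrightarrow{\upsilon_2\overline\lambda[k]}Y'\Rightarrow X|Y\xrightarrow{\langle\upsilon_1\lambda[k],\upsilon_2\overline\lambda[k]\rangle}X'|Y'$; (sum) $X\xrightarrow\theta X',\mathrm{keys}(Y)=\emptyset\Rightarrow X+Y\xrightarrow{+_{\mathrm L}\theta}X'+Y$, $Y+X\xrightarrow{+_{\mathrm R}\theta}Y+X'$. Backward transitions are converses. Only processes reachable by a path from a key-free process are considered. Transitions are connected if there is a path from the source of one to the target of the other. CCSK: same processes; for each CCSK$^{\mathrm P}$ transition with label $\theta$ a CCSK transition (same direction, same processes) with label $\ell(\theta)[\mathrm{key}(\theta)]$ (a bijection; $\hat t$ denotes the CCSK$^{\mathrm P}$ transition corresponding to $t$). Independence $\iota$ on proof labels: least relation closed under (C1) $+_D\theta\mathrel\iota+_D\theta'$ if $\theta\mathrel\iota\theta'$; (P1) $|_D\theta\mathrel\iota|_D\theta'$ if $\theta\mathrel\iota\theta'$; (P2$_k$) $|_D\theta\mathrel\iota|_{\bar D}\theta'$ if $\mathrm{key}(\theta)\ne\mathrm{key}(\theta')$; (S1) $|_D\theta\mathrel\iota\langle\theta_{\mathrm L},\theta_{\mathrm R}\rangle$ if $\theta\mathrel\iota\theta_D$; (S2)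 $\langle\theta_{\mathrm L},\theta_{\mathrm R}\rangle\mathrel\iota|_D\theta$ if $\theta_D\mathrel\iota\theta$; (S3) $\langle\theta_1,\theta_2\rangle\mathrel\iota\langle\theta_1',\theta_2'\rangle$ if $\theta_1\mathrel\iota\theta_1'$ and $\theta_2\mathrel\iota\theta_2'$. For CCSK transitions $t\mathrel\iota u$ iff $t,u$ are connected and the labels of $\hat t,\hat u$ satisfy $\iota$. CCSK transitions $t:P\to Q$ with label $\alpha[m]$ and $u:P\to R$ with label $\beta[n]$ (each forward or backward) are directly key independent if $m\ne n$ and there are transitions $u':Q\to S$ with label $\beta[n]$ and the direction of $u$, and $t':R\to S$ with label $\alpha[m]$ and the direction of $t$. *)

(* Defs.v *)
From Stdlib Require Import List Relations.
Import ListNotations.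
Set Implicit Arguments.

Section CCSK.
Variable N : Type.

Inductive vlab : Type := Nm (a : N) | CoNm (a : N).
Definition vbar (l : vlab) : vlab :=
  match l with Nm a => CoNm a | CoNm a => Nm a end.
Inductive label : Type := Vis (l : vlab) | Tau.

Definition key := nat.

Inductive proc : Type :=
| Nil
| Pre   (a : label) (X : proc)
| Res   (X : proc) (l : vlab)
| Sum   (X Y : proc)
| Par   (X Y : proc)
| KPre  (a : label) (k : key) (X : proc).

Fixpoint keys (X : proc) : list key :=
  match X with
  | Nil => []
  | Pre _ X => keys X
  | Res X _ => keys X
  | Sum X Y => keys X ++ keys Y
  | Par X Y => keys X ++ keys Y
  | KPre _ k X => k :: keys X
  end.

Inductive dir : Type := DL | DR.
Definition dbar (d : dir) : dir := match d with DL => DR | DR => DL end.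

Inductive pelem : Type := PP (d : dir) | PS (d : dir).

(* proof keyed labels:
   PAct u a k          = u a[k]
   PSyn u u1 l u2 k    = u < u1 l[k] , u2 (vbar l)[k] > *)
Inductive plab : Type :=
| PAct (u : list pelem) (a : label) (k : key)
| PSyn (u : list pelem) (u1 : list pelem) (l : vlab) (u2 : list pelem) (k : key).

Definition lab (t : plab) : label :=
  match t with PAct _ a _ => a | PSyn _ _ _ _ _ => Tau end.
Definition pkey (t : plab) : key :=
  match t with PAct _ _ k => k | PSyn _ _ _ _ k => k end.
Definition pcons (p : pelem) (t : plab) : plab :=
  match t with
  | PAct u a k => PAct (p :: u) a k
  | PSyn u u1 l u2 k => PSyn (p :: u) u1 l u2 k
  end.
Definition comp (d : dir) (u1 : list pelem) (l : vlab) (u2 : list pelem) (k : key) : plab :=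
  match d with DL => PAct u1 (Vis l) k | DR => PAct u2 (Vis (vbar l)) k end.

Inductive ptrans : proc -> plab -> proc -> Prop :=
| t_act : forall a X k, keys X = [] -> ptrans (Pre a X) (PAct [] a k) (KPre a k X)
| t_pre : forall a k X t X', ptrans X t X' -> pkey t <> k ->
    ptrans (KPre a k X) t (KPre a k X')
| t_res : forall X t X' l, ptrans X t X' -> lab t <> Vis l -> lab t <> Vis (vbar l) ->
    ptrans (Res X l) t (Res X' l)
| t_parL : forall X t X' Y, ptrans X t X' -> ~ In (pkey t) (keys Y) ->
    ptrans (Par X Y) (pcons (PP DL) t) (Par X' Y)
| t_parR : forall X t X' Y, ptrans X t X' -> ~ In (pkey t) (keys Y) ->
    ptrans (Par Y X) (pcons (PP DR) t) (Par Y X')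
| t_syn : forall X X' Y Y' u1 u2 l k,
    ptrans X (PAct u1 (Vis l) k) X' -> ptrans Y (PAct u2 (Vis (vbar l)) k) Y' ->
    ptrans (Par X Y) (PSyn [] u1 l u2 k) (Par X' Y')
| t_sumL : forall X t X' Y, ptrans X t X' -> keys Y = [] ->
    ptrans (Sum X Y) (pcons (PS DL) t) (Sum X' Y)
| t_sumR : forall X t X' Y, ptrans X t X' -> keys Y = [] ->
    ptrans (Sum Y X) (pcons (PS DR) t) (Sum Y X').

Inductive fb : Type := Fw | Bw.
Definition pstep (f : fb) (P : proc) (t : plab) (Q : proc) : Prop :=
  match f with Fw => ptrans P t Q | Bw => ptrans Q t P end.

Definition onestep (P Q : proc) : Prop := exists f t, pstep f P t Q.
Definition path (P Q : proc) : Prop := clos_refl_trans proc onestep P Q.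
Definition reachable (P : proc) : Prop := exists X0, keys X0 = [] /\ path X0 P.

Definition ctrans (f : fb) (P : proc) (a : label) (k : key) (Q : proc) : Prop :=
  exists t, lab t = a /\ pkey t = k /\ pstep f P t Q.

Inductive iota : plab -> plab -> Prop :=
| C1 : forall d t t', iota t t' -> iota (pcons (PS d) t) (pcons (PS d) t')
| P1 : forall d t t', iota t t' -> iota (pcons (PP d) t) (pcons (PP d) t')
| P2 : forall d t t', pkey t <> pkey t' -> iota (pcons (PP d) t) (pcons (PP (dbar d)) t')
| S1 : forall d t u1 l u2 k, iota t (comp d u1 l u2 k) ->
    iota (pcons (PP d) t) (PSyn [] u1 l u2 k)
| S2 : forall d t u1 l u2 k, iota (comp d u1 l u2 k) t ->
    iota (PSyn [] u1 l u2 k) (pcons (PP d) t)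
| S3 : forall u1 l u2 k u1' l' u2' k',
    iota (PAct u1 (Vis l) k) (PAct u1' (Vis l') k') ->
    iota (PAct u2 (Vis (vbar l)) k) (PAct u2' (Vis (vbar l')) k') ->
    iota (PSyn [] u1 l u2 k) (PSyn [] u1' l' u2' k').

(* A CCSK transition is given by its (unique) CCSK^P counterpart
   (f, P, t, Q) with pstep f P t Q; its CCSK label is (lab t)[pkey t]. *)

Definition connected (P1 Q1 P2 Q2 : proc) : Prop := path P1 Q2.

Definition iota_tr (f1 : fb) (P1 : proc) (t1 : plab) (Q1 : proc)
                   (f2 : fb) (P2 : proc) (t2 : plab) (Q2 : proc) : Prop :=
  connected P1 Q1 P2 Q2 /\ iota t1 t2.

Definition dki (f1 : fb) (P : proc) (t1 : plab) (Q : proc)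
               (f2 : fb) (t2 : plab) (R : proc) : Prop :=
  pkey t1 <> pkey t2 /\
  exists S, ctrans f2 Q (lab t2) (pkey t2) S /\ ctrans f1 R (lab t1) (pkey t1) S.

End CCSK.

(* Main.v *)
Require Import Defs.
From Stdlib Require Import List Relations Lia Arith.
Import ListNotations.
Set Implicit Arguments.

Fixpoint cnt (j : nat) (l : list nat) : nat :=
  match l with [] => 0 | x :: l => (if Nat.eqb j x then 1 else 0) + cnt j l end.

Lemma cnt_app j l1 l2 : cnt j (l1 ++ l2) = cnt j l1 + cnt j l2.
Proof. induction l1; simpl; lia. Qed.

Lemma cnt_notin j l : ~ In j l -> cnt j l = 0.
Proof.
  induction l; simpl; auto. intros H.
  destruct (Nat.eqb_spec j a); subst; [exfalso; tauto|]. rewrite IHl; auto.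
Qed.

Lemma cnt_in j l : In j l -> cnt j l > 0.
Proof.
  induction l; simpl; [tauto|]. intros [H|H].
  - subst. rewrite Nat.eqb_refl. lia.
  - specialize (IHl H). lia.
Qed.

Lemma pkey_pcons N p (t : plab N) : pkey (pcons p t) = pkey t.
Proof. destruct t; reflexivity. Qed.
Lemma lab_pcons N p (t : plab N) : lab (pcons p t) = lab t.
Proof. destruct t; reflexivity. Qed.

Lemma cnt_step N (P Q : proc N) t : ptrans P t Q ->
  cnt (pkey t) (keys P) = 0 /\ cnt (pkey t) (keys Q) > 0 /\
  forall j, j <> pkey t -> cnt j (keys Q) = cnt j (keys P).
Proof.
  induction 1; simpl in *; try rewrite !pkey_pcons; try rewrite !cnt_app.
  - rewrite H. simpl. rewrite Nat.eqb_refl. split; [|split]; [lia|lia|].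
    intros j Hj. apply Nat.eqb_neq in Hj. rewrite Hj. reflexivity.
  - apply Nat.eqb_neq in H0. rewrite H0. destruct IHptrans as (A&B&C).
    split; [lia|split;[lia|]]. intros j Hj. rewrite ?cnt_app, C; auto.
  - exact IHptrans.
  - destruct IHptrans as (A&B&C). rewrite (cnt_notin _ _ H0).
    split;[lia|split;[lia|]]. intros j Hj. rewrite ?cnt_app, C; auto.
  - destruct IHptrans as (A&B&C). rewrite (cnt_notin _ _ H0).
    split;[lia|split;[lia|]]. intros j Hj. rewrite ?cnt_app, C; auto.
  - destruct IHptrans1 as (A&B&C). destruct IHptrans2 as (A'&B'&C').
    simpl in *. split;[lia|split;[lia|]]. intros j Hj. rewrite ?cnt_app, C, C'; auto.
  - rewrite H0. simpl. destruct IHptrans as (A&B&C).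
    split;[lia|split;[lia|]]. intros j Hj. rewrite ?cnt_app, C; auto.
  - rewrite H0. simpl. destruct IHptrans as (A&B&C).
    split;[lia|split;[lia|]]. intros j Hj. rewrite ?cnt_app, C; auto.
Qed.

Definition kstep N (k : key) (A B : proc N) := exists f t, pkey t = k /\ pstep f A t B.
Definition ostep N (k : key) (A B : proc N) := A = B \/ kstep k A B.

Lemma kcnt N k (A B : proc N) : kstep k A B ->
  cnt k (keys A) <> cnt k (keys B) /\ forall j, j <> k -> cnt j (keys A) = cnt j (keys B).
Proof.
  intros (f&t&<-&H). destruct f; simpl in H; apply cnt_step in H as (X&Y&Z).
  - split; [lia|]. intros j Hj; rewrite Z; auto.
  - split; [lia|]. intros j Hj; rewrite Z; auto.
Qed.

Lemma ocnt N k (A B : proc N) : ostep k A B ->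
  forall j, j <> k -> cnt j (keys A) = cnt j (keys B).
Proof. intros [->|H]; auto. apply kcnt in H. apply H. Qed.

Lemma kstep_neq N k (A : proc N) : kstep k A A -> False.
Proof. intros H; apply kcnt in H; tauto. Qed.

Lemma square N k1 k2 (X X1 X2 A : proc N) : kstep k1 X X1 -> kstep k2 X X2 ->
  ostep k2 X1 A -> ostep k1 X2 A -> k1 <> k2 -> kstep k2 X1 A /\ kstep k1 X2 A.
Proof.
  intros H1 H2 H3 H4 Hk.
  pose proof (kcnt H1) as [a1 b1]. pose proof (kcnt H2) as [a2 b2].
  pose proof (ocnt H3) as c3. pose proof (ocnt H4) as c4.
  specialize (b1 k2 (not_eq_sym Hk)). specialize (b2 k1 Hk).
  specialize (c3 k1 Hk). specialize (c4 k2 (not_eq_sym Hk)).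
  destruct H3 as [<-|H3]; [exfalso; lia|].
  destruct H4 as [<-|H4]; [exfalso; lia|]. auto.
Qed.

Lemma stepk N {f} {A B : proc N} {t} : pstep f A t B -> kstep (pkey t) A B.
Proof. intros H; exists f, t; auto. Qed.

Lemma ps_nil N f t (Q : proc N) : pstep f (Nil N) t Q -> False.
Proof. destruct f; simpl; intro H; inversion H. Qed.

Lemma ps_pre N f a (X : proc N) t Q : pstep f (Pre a X) t Q ->
  f = Fw /\ exists k, t = PAct [] a k /\ Q = KPre a k X /\ keys X = [].
Proof. destruct f; simpl; intro H; inversion H; subst; eauto 10. Qed.

Lemma ps_kpre N f a k (X : proc N) t Q : pstep f (KPre a k X) t Q ->
  (exists X', pstep f X t X' /\ pkey t <> k /\ Q = KPre a k X') \/
  (f = Bw /\ t = PAct [] a k /\ Q = Pre a X /\ keys X = []).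
Proof. destruct f; simpl; intro H; inversion H; subst; eauto 10. Qed.

Lemma ps_res N f (X : proc N) l t Q : pstep f (Res X l) t Q ->
  exists X', pstep f X t X' /\ lab t <> Vis l /\ lab t <> Vis (vbar l) /\ Q = Res X' l.
Proof. destruct f; simpl; intro H; inversion H; subst; eauto 10. Qed.

Lemma ps_sum N f (X Y : proc N) t Q : pstep f (Sum X Y) t Q ->
  (exists th X', t = pcons (PS DL) th /\ pstep f X th X' /\ keys Y = [] /\ Q = Sum X' Y) \/
  (exists th Y', t = pcons (PS DR) th /\ pstep f Y th Y' /\ keys X = [] /\ Q = Sum X Y').
Proof. destruct f; simpl; intro H; inversion H; subst; eauto 10. Qed.

Lemma ps_par N f (X Y : proc N) t Q : pstep f (Par X Y) t Q ->
  (exists th X', t = pcons (PP DL) th /\ pstep f X th X' /\ ~ In (pkey th) (keys Y) /\ Q = Par X' Y) \/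
  (exists th Y', t = pcons (PP DR) th /\ pstep f Y th Y' /\ ~ In (pkey th) (keys X) /\ Q = Par X Y') \/
  (exists u1 u2 l k X' Y', t = PSyn [] u1 l u2 k /\ pstep f X (PAct u1 (Vis l) k) X' /\
     pstep f Y (PAct u2 (Vis (vbar l)) k) Y' /\ Q = Par X' Y').
Proof. destruct f; simpl; intro H; inversion H; subst; eauto 20. Qed.

Lemma mk_kpre N f a k (X X' : proc N) t : pstep f X t X' -> pkey t <> k ->
  pstep f (KPre a k X) t (KPre a k X').
Proof. destruct f; simpl; intros; constructor; auto. Qed.
Lemma mk_res N f (X X' : proc N) l t : pstep f X t X' -> lab t <> Vis l -> lab t <> Vis (vbar l) ->
  pstep f (Res X l) t (Res X' l).
Proof. destruct f; simpl; intros; constructor; auto. Qed.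
Lemma mk_sumL N f (X X' Y : proc N) t : pstep f X t X' -> keys Y = [] ->
  pstep f (Sum X Y) (pcons (PS DL) t) (Sum X' Y).
Proof. destruct f; simpl; intros; constructor; auto. Qed.
Lemma mk_sumR N f (X X' Y : proc N) t : pstep f X t X' -> keys Y = [] ->
  pstep f (Sum Y X) (pcons (PS DR) t) (Sum Y X').
Proof. destruct f; simpl; intros; constructor; auto. Qed.
Lemma mk_parL N f (X X' Y : proc N) t : pstep f X t X' -> ~ In (pkey t) (keys Y) ->
  pstep f (Par X Y) (pcons (PP DL) t) (Par X' Y).
Proof. destruct f; simpl; intros; constructor; auto. Qed.
Lemma mk_parR N f (X X' Y : proc N) t : pstep f X t X' -> ~ In (pkey t) (keys Y) ->
  pstep f (Par Y X) (pcons (PP DR) t) (Par Y X').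
Proof. destruct f; simpl; intros; constructor; auto. Qed.
Lemma mk_syn N f (X X' Y Y' : proc N) u1 u2 l k :
  pstep f X (PAct u1 (Vis l) k) X' -> pstep f Y (PAct u2 (Vis (vbar l)) k) Y' ->
  pstep f (Par X Y) (PSyn [] u1 l u2 k) (Par X' Y').
Proof. destruct f; simpl; intros; econstructor; eauto. Qed.

Lemma ks_pre N j a (X Z : proc N) : kstep j (Pre a X) Z -> Z = KPre a j X.
Proof. intros (f&t&<-&H). apply ps_pre in H as (_&k&->&->&_). reflexivity. Qed.

Lemma ks_kpre N j a k (X Z : proc N) : kstep j (KPre a k X) Z ->
  (exists A, Z = KPre a k A /\ kstep j X A /\ j <> k) \/ (j = k /\ Z = Pre a X).
Proof.
  intros (f&t&<-&H). apply ps_kpre in H as [(X'&H1&H2&->)|(_&->&->&_)].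
  - left. exists X'. split; auto. split; auto. exists f, t; auto.
  - right. auto.
Qed.

Lemma ks_res N j l (X Z : proc N) : kstep j (Res X l) Z -> exists A, Z = Res A l /\ kstep j X A.
Proof. intros (f&t&<-&H). apply ps_res in H as (X'&H1&_&_&->). exists X'. split; auto. exists f, t; auto. Qed.

Lemma ks_sum N j (X Y Z : proc N) : kstep j (Sum X Y) Z -> exists A B, Z = Sum A B /\
  ((kstep j X A /\ B = Y /\ keys Y = []) \/ (A = X /\ kstep j Y B /\ keys X = [])).
Proof.
  intros (f&t&<-&H). apply ps_sum in H as [(th&X'&->&H1&H2&->)|(th&Y'&->&H1&H2&->)].
  - exists X', Y. split; auto. left. rewrite pkey_pcons. split; auto. exists f, th; auto.
  - exists X, Y'. split; auto. right. rewrite pkey_pcons. split; auto. split; auto. exists f, th; auto.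
Qed.

Lemma ks_par N j (X Y Z : proc N) : kstep j (Par X Y) Z -> exists A B, Z = Par A B /\
  ostep j X A /\ ostep j Y B.
Proof.
  intros (f&t&<-&H). apply ps_par in H.
  destruct H as [(th&X'&->&H1&H2&->)|[(th&Y'&->&H1&H2&->)|(u1&u2&l&k&X'&Y'&->&H1&H2&->)]].
  - exists X', Y. rewrite pkey_pcons. split; [reflexivity|]. split; [right; exists f, th; auto|left; auto].
  - exists X, Y'. rewrite pkey_pcons. split; [reflexivity|]. split; [left; auto|right; exists f, th; auto].
  - exists X', Y'. split; [reflexivity|]. split; right.
    + exists f, (PAct u1 (Vis l) k). auto.
    + exists f, (PAct u2 (Vis (vbar l)) k). auto.
Qed.

Lemma iota_key N (x y : plab N) : iota x y -> pkey x <> pkey y.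
Proof. induction 1; rewrite ?pkey_pcons; simpl in *; auto; destruct d; simpl in *; auto. Qed.

Lemma pcons_inj N p p' (t t' : plab N) : pcons p t = pcons p' t' -> p = p' /\ t = t'.
Proof. destruct t, t'; simpl; intro H; inversion H; subst; auto. Qed.
Lemma pcons_syn N p (t : plab N) u1 l u2 k : pcons p t <> PSyn [] u1 l u2 k.
Proof. destruct t; discriminate. Qed.
Lemma pcons_act N p (t : plab N) a k : pcons p t <> PAct [] a k.
Proof. destruct t; discriminate. Qed.

Lemma iota_inv N (x y : plab N) : iota x y ->
  (exists d t t', x = pcons (PS d) t /\ y = pcons (PS d) t' /\ iota t t') \/
  (exists d t t', x = pcons (PP d) t /\ y = pcons (PP d) t' /\ iota t t') \/
  (exists d t t', x = pcons (PP d) t /\ y = pcons (PP (dbar d)) t' /\ pkey t <> pkey t') \/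
  (exists d t u1 l u2 k, x = pcons (PP d) t /\ y = PSyn [] u1 l u2 k /\ iota t (comp d u1 l u2 k)) \/
  (exists d t u1 l u2 k, y = pcons (PP d) t /\ x = PSyn [] u1 l u2 k /\ iota (comp d u1 l u2 k) t) \/
  (exists u1 l u2 k u1' l' u2' k', x = PSyn [] u1 l u2 k /\ y = PSyn [] u1' l' u2' k' /\
     iota (PAct u1 (Vis l) k) (PAct u1' (Vis l') k') /\
     iota (PAct u2 (Vis (vbar l)) k) (PAct u2' (Vis (vbar l')) k')).
Proof. destruct 1; [left|right;left|right;right;left|do 3 right; left|do 4 right; left|do 5 right]; eauto 20. Qed.

Lemma iota_act_l N a k (y : plab N) : iota (PAct [] a k) y -> False.
Proof.
  intros H; apply iota_inv in H.
  repeat match goal with H : _ \/ _ |- _ => destruct H | H : exists _, _ |- _ => destruct H | H : _ /\ _ |- _ => destruct H end;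
  try (symmetry in H; eapply pcons_act; eassumption); discriminate.
Qed.
Lemma iota_act_r N a k (x : plab N) : iota x (PAct [] a k) -> False.
Proof.
  intros H; apply iota_inv in H.
  repeat match goal with H : _ \/ _ |- _ => destruct H | H : exists _, _ |- _ => destruct H | H : _ /\ _ |- _ => destruct H end;
  try (symmetry in H0; eapply pcons_act; eassumption); try (symmetry in H; eapply pcons_act; eassumption); discriminate.
Qed.

Lemma ks_sum_o N j (X Y Z : proc N) : kstep j (Sum X Y) Z -> exists A B, Z = Sum A B /\
  ostep j X A /\ ostep j Y B.
Proof.
  intros H; apply ks_sum in H as (A&B&->&HH); exists A, B;
  destruct HH as [(H1&->&_)|(->&H1&_)]; unfold ostep; auto.
Qed.

Lemma kk_contra N k j (A B : proc N) : kstep k A B -> ostep j B A -> j <> k -> False.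
Proof.
  intros H1 H2 Hj. apply kcnt in H1 as [a _]. pose proof (ocnt H2 (not_eq_sym Hj)). lia.
Qed.

Lemma keys_contra N k (A B : proc N) : kstep k A B -> keys A = [] -> keys B = [] -> False.
Proof. intros H1 HA HB. apply kcnt in H1 as [a _]. rewrite HA, HB in a. simpl in a. lia. Qed.

Ltac dstr := repeat match goal with
  | H : _ \/ _ |- _ => destruct H
  | H : exists _, _ |- _ => destruct H
  | H : _ /\ _ |- _ => destruct H end.

Lemma core N (P : proc N) : forall f1 t1 Q f2 t2 R S,
  pstep f1 P t1 Q -> pstep f2 P t2 R -> pkey t1 <> pkey t2 ->
  kstep (pkey t2) Q S -> kstep (pkey t1) R S -> iota t1 t2.
Proof.
  induction P as [|a X IHP|X IHP l|X IHP1 Y IHP2|X IHP1 Y IHP2|a k X IHP]; intros f1 t1 Q f2 t2 R S H1 H2 Hk HQ HR.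
  - exfalso; eapply ps_nil; eauto.
  - apply ps_pre in H1 as (_&k1&->&->&_). apply ps_pre in H2 as (_&k2&->&->&_).
    simpl in *. exfalso.
    apply ks_kpre in HQ as [(A&->&_&_)|(E&_)]; [|congruence].
    apply ks_kpre in HR as [(A'&E&_&_)|(E&_)]; [|congruence].
    inversion E; congruence.
  - apply ps_res in H1 as (X1&H1&_&_&->). apply ps_res in H2 as (X2&H2&_&_&->).
    apply ks_res in HQ as (A&->&HQ). apply ks_res in HR as (A'&E&HR).
    inversion E; subst. eapply IHP; eauto.
  - apply ps_sum in H1 as [(th1&X1&->&H1&HY&->)|(th1&Y1&->&H1&HX&->)];
    apply ps_sum in H2 as [(th2&X2&->&H2&HY'&->)|(th2&Y2&->&H2&HX'&->)];
    rewrite ?pkey_pcons in *.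
    + apply ks_sum_o in HQ as (A&B&->&HQ1&HQ2). apply ks_sum_o in HR as (A'&B'&E&HR1&HR2).
      inversion E; subst.
      destruct (square (stepk H1) (stepk H2) HQ1 HR1 Hk).
      apply C1. eapply IHP1; eauto.
    + exfalso. apply ks_sum in HQ as (A&B&->&[(HQ1&->&_)|(->&HQ2&HK)]).
      * apply ks_sum_o in HR as (A'&B'&E&HR1&HR2). inversion E; subst.
        exact (kk_contra (stepk H2) HR2 Hk).
      * exact (keys_contra (stepk H1) HX' HK).
    + exfalso. apply ks_sum in HQ as (A&B&->&[(HQ1&->&HK)|(->&HQ2&_)]).
      * exact (keys_contra (stepk H1) HY' HK).
      * apply ks_sum_o in HR as (A'&B'&E&HR1&HR2). inversion E; subst.
        exact (kk_contra (stepk H2) HR1 Hk).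
    + apply ks_sum_o in HQ as (A&B&->&HQ1&HQ2). apply ks_sum_o in HR as (A'&B'&E&HR1&HR2).
      inversion E; subst.
      destruct (square (stepk H1) (stepk H2) HQ2 HR2 Hk).
      apply C1. eapply IHP2; eauto.
  - apply ps_par in H1 as [(th1&X1&->&H1&_&->)|[(th1&Y1&->&H1&_&->)|(u1&u2&l&k1&X1&Y1&->&H1&H1'&->)]];
    apply ps_par in H2 as [(th2&X2&->&H2&_&->)|[(th2&Y2&->&H2&_&->)|(v1&v2&l'&k'&X2&Y2&->&H2&H2'&->)]];
    rewrite ?pkey_pcons in *; simpl pkey in *;
    apply ks_par in HQ as (A&B&->&HQ1&HQ2); apply ks_par in HR as (A'&B'&E&HR1&HR2);
    inversion E; subst.
    + destruct (square (stepk H1) (stepk H2) HQ1 HR1 Hk). apply P1. eapply IHP1; eauto.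
    + exact (P2 DL _ _ Hk).
    + destruct (square (stepk H1) (stepk H2) HQ1 HR1 Hk). apply (S1 DL). simpl. eapply IHP1; eauto.
    + exact (P2 DR _ _ Hk).
    + destruct (square (stepk H1) (stepk H2) HQ2 HR2 Hk). apply P1. eapply IHP2; eauto.
    + destruct (square (stepk H1) (stepk H2') HQ2 HR2 Hk). apply (S1 DR). simpl. eapply IHP2; eauto.
    + destruct (square (stepk H1) (stepk H2) HQ1 HR1 Hk). apply (S2 DL). simpl. eapply IHP1; eauto.
    + destruct (square (stepk H1') (stepk H2) HQ2 HR2 Hk). apply (S2 DR). simpl. eapply IHP2; eauto.
    + destruct (square (stepk H1) (stepk H2) HQ1 HR1 Hk).
      destruct (square (stepk H1') (stepk H2') HQ2 HR2 Hk).
      apply S3; [eapply IHP1|eapply IHP2]; eauto.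
  - apply ps_kpre in H1 as [(X1&H1&Hk1&->)|(_&->&->&_)];
    apply ps_kpre in H2 as [(X2&H2&Hk2&->)|(_&->&->&_)]; simpl pkey in *.
    + apply ks_kpre in HQ as [(A&->&HQ&_)|(E&_)]; [|congruence].
      apply ks_kpre in HR as [(A'&E&HR&_)|(E&_)]; [|congruence].
      inversion E; subst. eapply IHP; eauto.
    + exfalso. apply ks_pre in HR; subst.
      apply ks_kpre in HQ as [(A&E&_&Hn)|(_&E)]; [congruence|discriminate].
    + exfalso. apply ks_pre in HQ; subst.
      apply ks_kpre in HR as [(A&E&_&Hn)|(_&E)]; [congruence|discriminate].
    + congruence.
Qed.

Ltac clean := repeat (match goal with
 | H : pcons _ _ = pcons _ _ |- _ => apply pcons_inj in H; destruct H
 | H : pcons _ _ = PSyn [] _ _ _ _ |- _ => exfalso; eapply pcons_syn; exact H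
 | H : PSyn [] _ _ _ _ = pcons _ _ |- _ => exfalso; eapply pcons_syn; exact (eq_sym H)
 | H : PP _ = PP _ |- _ => injection H; clear H; intros
 | H : PS _ = PS _ |- _ => injection H; clear H; intros
 | H : PS _ = PP _ |- _ => discriminate H
 | H : PP _ = PS _ |- _ => discriminate H
 | H : PSyn _ _ _ _ _ = PSyn _ _ _ _ _ |- _ => injection H; clear H; intros
 end; subst).

Lemma iota_PS N d d' (t t' : plab N) : iota (pcons (PS d) t) (pcons (PS d') t') -> d = d' /\ iota t t'.
Proof. intros H; apply iota_inv in H; dstr; clean; try tauto; auto. Qed.

Lemma iota_PP N d d' (t t' : plab N) : iota (pcons (PP d) t) (pcons (PP d') t') ->
  (d = d' /\ iota t t') \/ (d' = dbar d /\ pkey t <> pkey t').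
Proof. intros H; apply iota_inv in H; dstr; clean; try tauto; auto. Qed.

Lemma iota_PPS N d (t : plab N) u1 l u2 k : iota (pcons (PP d) t) (PSyn [] u1 l u2 k) ->
  iota t (comp d u1 l u2 k).
Proof. intros H; apply iota_inv in H; dstr; clean; try tauto; auto. Qed.

Lemma iota_SPP N d (t : plab N) u1 l u2 k : iota (PSyn [] u1 l u2 k) (pcons (PP d) t) ->
  iota (comp d u1 l u2 k) t.
Proof. intros H; apply iota_inv in H; dstr; clean; try tauto; auto. Qed.

Lemma iota_SS N u1 (l : vlab N) u2 k u1' l' u2' k' :
  iota (PSyn [] u1 l u2 k) (PSyn [] u1' l' u2' k') ->
  iota (PAct u1 (Vis l) k) (PAct u1' (Vis l') k') /\
  iota (PAct u2 (Vis (vbar l)) k) (PAct u2' (Vis (vbar l')) k').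
Proof. intros H; apply iota_inv in H; dstr; clean; try tauto; auto. Qed.

Lemma nin_step N f (A B : proc N) t j : pstep f A t B -> j <> pkey t -> ~ In j (keys A) -> ~ In j (keys B).
Proof.
  intros H Hj Hn Hin. apply stepk in H. apply kcnt in H as [_ H].
  specialize (H j Hj). apply cnt_in in Hin. apply cnt_notin in Hn. lia.
Qed.

Lemma act_of N (s : plab N) l : lab s = Vis l -> exists u, s = PAct u (Vis l) (pkey s).
Proof. destruct s; simpl; intro H; [subst; eauto|discriminate]. Qed.

Lemma mkct N {f} {P Q : proc N} {s a k} : lab s = a -> pkey s = k -> pstep f P s Q -> ctrans f P a k Q.
Proof. intros; exists s; auto. Qed.

Lemma fwd N (P : proc N) : forall f1 t1 Q f2 t2 R,
  pstep f1 P t1 Q -> pstep f2 P t2 R -> iota t1 t2 ->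
  exists S, ctrans f2 Q (lab t2) (pkey t2) S /\ ctrans f1 R (lab t1) (pkey t1) S.
Proof.
  induction P as [|a X IHP|X IHP l|X IHP1 Y IHP2|X IHP1 Y IHP2|a k X IHP];
  intros f1 t1 Q f2 t2 R H1 H2 Hi.
  - exfalso; eapply ps_nil; eauto.
  - apply ps_pre in H1 as (_&k1&->&->&_). exfalso; eapply iota_act_l; eauto.
  - apply ps_res in H1 as (X1&H1&La&Lb&->). apply ps_res in H2 as (X2&H2&Lc&Ld&->).
    destruct (IHP _ _ _ _ _ _ H1 H2 Hi) as (S'&(s2&Ls2&Ks2&Hs2)&(s1&Ls1&Ks1&Hs1)).
    exists (Res S' l). split.
    + apply (mkct Ls2 Ks2). apply mk_res; congruence.
    + apply (mkct Ls1 Ks1). apply mk_res; congruence.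
  - apply ps_sum in H1 as [(th1&X1&->&H1&HY&->)|(th1&Y1&->&H1&HX&->)];
    apply ps_sum in H2 as [(th2&X2&->&H2&HY'&->)|(th2&Y2&->&H2&HX'&->)];
    apply iota_PS in Hi as [Ed Hi]; try discriminate Ed;
    rewrite ?lab_pcons, ?pkey_pcons.
    + destruct (IHP1 _ _ _ _ _ _ H1 H2 Hi) as (S'&(s2&Ls2&Ks2&Hs2)&(s1&Ls1&Ks1&Hs1)).
      exists (Sum S' Y). split.
      * apply (mkct (s := pcons (PS DL) s2)); rewrite ?lab_pcons, ?pkey_pcons; auto. apply mk_sumL; auto.
      * apply (mkct (s := pcons (PS DL) s1)); rewrite ?lab_pcons, ?pkey_pcons; auto. apply mk_sumL; auto.
    + destruct (IHP2 _ _ _ _ _ _ H1 H2 Hi) as (S'&(s2&Ls2&Ks2&Hs2)&(s1&Ls1&Ks1&Hs1)).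
      exists (Sum X S'). split.
      * apply (mkct (s := pcons (PS DR) s2)); rewrite ?lab_pcons, ?pkey_pcons; auto. apply mk_sumR; auto.
      * apply (mkct (s := pcons (PS DR) s1)); rewrite ?lab_pcons, ?pkey_pcons; auto. apply mk_sumR; auto.
  - pose proof (iota_key Hi) as Hk.
    apply ps_par in H1 as [(th1&X1&->&H1&Hn1&->)|[(th1&Y1&->&H1&Hn1&->)|(u1&u2&l&k1&X1&Y1&->&H1&H1'&->)]];
    apply ps_par in H2 as [(th2&X2&->&H2&Hn2&->)|[(th2&Y2&->&H2&Hn2&->)|(v1&v2&l'&k'&X2&Y2&->&H2&H2'&->)]];
    rewrite ?lab_pcons, ?pkey_pcons in *; simpl lab in *; simpl pkey in *.
    +
      apply iota_PP in Hi as [(_&Hi)|(E&_)]; [|discriminate E].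
      destruct (IHP1 _ _ _ _ _ _ H1 H2 Hi) as (S'&(s2&Ls2&Ks2&Hs2)&(s1&Ls1&Ks1&Hs1)).
      exists (Par S' Y). split.
      * apply (mkct (s := pcons (PP DL) s2)); rewrite ?lab_pcons, ?pkey_pcons; auto. apply mk_parL; congruence.
      * apply (mkct (s := pcons (PP DL) s1)); rewrite ?lab_pcons, ?pkey_pcons; auto. apply mk_parL; congruence.
    +
      exists (Par X1 Y2). split.
      * apply (mkct (s := pcons (PP DR) th2)); rewrite ?lab_pcons, ?pkey_pcons; auto. apply mk_parR; auto.
        eapply nin_step; eauto.
      * apply (mkct (s := pcons (PP DL) th1)); rewrite ?lab_pcons, ?pkey_pcons; auto. apply mk_parL; auto.
        eapply nin_step; eauto.
    +
      apply iota_PPS in Hi. simpl in Hi.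
      destruct (IHP1 _ _ _ _ _ _ H1 H2 Hi) as (S'&(s2&Ls2&Ks2&Hs2)&(s1&Ls1&Ks1&Hs1)).
      simpl in Ls2, Ks2. apply act_of in Ls2 as (w&Ew). rewrite Ew, Ks2 in Hs2.
      exists (Par S' Y2). split.
      * apply (mkct (s := PSyn [] w l' v2 k')); auto. apply mk_syn; auto.
      * apply (mkct (s := pcons (PP DL) s1)); rewrite ?lab_pcons, ?pkey_pcons; auto. apply mk_parL; auto.
        rewrite Ks1. eapply nin_step; eauto.
    +
      exists (Par X2 Y1). split.
      * apply (mkct (s := pcons (PP DL) th2)); rewrite ?lab_pcons, ?pkey_pcons; auto. apply mk_parL; auto.
        eapply nin_step; eauto.
      * apply (mkct (s := pcons (PP DR) th1)); rewrite ?lab_pcons, ?pkey_pcons; auto. apply mk_parR; auto.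
        eapply nin_step; eauto.
    +
      apply iota_PP in Hi as [(_&Hi)|(E&_)]; [|discriminate E].
      destruct (IHP2 _ _ _ _ _ _ H1 H2 Hi) as (S'&(s2&Ls2&Ks2&Hs2)&(s1&Ls1&Ks1&Hs1)).
      exists (Par X S'). split.
      * apply (mkct (s := pcons (PP DR) s2)); rewrite ?lab_pcons, ?pkey_pcons; auto. apply mk_parR; congruence.
      * apply (mkct (s := pcons (PP DR) s1)); rewrite ?lab_pcons, ?pkey_pcons; auto. apply mk_parR; congruence.
    +
      apply iota_PPS in Hi. simpl in Hi.
      destruct (IHP2 _ _ _ _ _ _ H1 H2' Hi) as (S'&(s2&Ls2&Ks2&Hs2)&(s1&Ls1&Ks1&Hs1)).
      simpl in Ls2, Ks2. apply act_of in Ls2 as (w&Ew). rewrite Ew, Ks2 in Hs2.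
      exists (Par X2 S'). split.
      * apply (mkct (s := PSyn [] v1 l' w k')); auto. apply mk_syn; auto.
      * apply (mkct (s := pcons (PP DR) s1)); rewrite ?lab_pcons, ?pkey_pcons; auto. apply mk_parR; auto.
        rewrite Ks1. eapply nin_step; eauto.
    +
      apply iota_SPP in Hi. simpl in Hi.
      destruct (IHP1 _ _ _ _ _ _ H1 H2 Hi) as (S'&(s2&Ls2&Ks2&Hs2)&(s1&Ls1&Ks1&Hs1)).
      simpl in Ls1, Ks1. apply act_of in Ls1 as (w&Ew). rewrite Ew, Ks1 in Hs1.
      exists (Par S' Y1). split.
      * apply (mkct (s := pcons (PP DL) s2)); rewrite ?lab_pcons, ?pkey_pcons; auto. apply mk_parL; auto.
        rewrite Ks2. eapply nin_step; eauto.
      * apply (mkct (s := PSyn [] w l u2 k1)); auto. apply mk_syn; auto.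
    +
      apply iota_SPP in Hi. simpl in Hi.
      destruct (IHP2 _ _ _ _ _ _ H1' H2 Hi) as (S'&(s2&Ls2&Ks2&Hs2)&(s1&Ls1&Ks1&Hs1)).
      simpl in Ls1, Ks1. apply act_of in Ls1 as (w&Ew). rewrite Ew, Ks1 in Hs1.
      exists (Par X1 S'). split.
      * apply (mkct (s := pcons (PP DR) s2)); rewrite ?lab_pcons, ?pkey_pcons; auto. apply mk_parR; auto.
        rewrite Ks2. eapply nin_step; eauto.
      * apply (mkct (s := PSyn [] u1 l w k1)); auto. apply mk_syn; auto.
    +
      apply iota_SS in Hi as [HiL HiR].
      destruct (IHP1 _ _ _ _ _ _ H1 H2 HiL) as (SX&(s2&Ls2&Ks2&Hs2)&(s1&Ls1&Ks1&Hs1)).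
      destruct (IHP2 _ _ _ _ _ _ H1' H2' HiR) as (SY&(r2&Lr2&Kr2&Hr2)&(r1&Lr1&Kr1&Hr1)).
      simpl in Ls1, Ks1, Ls2, Ks2, Lr1, Kr1, Lr2, Kr2.
      apply act_of in Ls1 as (w1&Ew1). rewrite Ew1, Ks1 in Hs1.
      apply act_of in Ls2 as (w2&Ew2). rewrite Ew2, Ks2 in Hs2.
      apply act_of in Lr1 as (z1&Ez1). rewrite Ez1, Kr1 in Hr1.
      apply act_of in Lr2 as (z2&Ez2). rewrite Ez2, Kr2 in Hr2.
      exists (Par SX SY). split.
      * apply (mkct (s := PSyn [] w2 l' z2 k')); auto. apply mk_syn; auto.
      * apply (mkct (s := PSyn [] w1 l z1 k1)); auto. apply mk_syn; auto.
  - apply ps_kpre in H1 as [(X1&H1&Hk1&->)|(_&->&->&_)];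
    apply ps_kpre in H2 as [(X2&H2&Hk2&->)|(_&->&->&_)].
    + destruct (IHP _ _ _ _ _ _ H1 H2 Hi) as (S'&(s2&Ls2&Ks2&Hs2)&(s1&Ls1&Ks1&Hs1)).
      exists (KPre a k S'). split.
      * apply (mkct Ls2 Ks2). apply mk_kpre; congruence.
      * apply (mkct Ls1 Ks1). apply mk_kpre; congruence.
    + exfalso; eapply iota_act_r; eauto.
    + exfalso; eapply iota_act_l; eauto.
    + exfalso; eapply iota_act_l; eauto.
Qed.

Theorem lemma6p11 (N : Type) (P Q R : proc N) (f1 f2 : fb) (t1 t2 : plab N) :
  reachable P ->
  pstep f1 P t1 Q -> pstep f2 P t2 R ->
  (dki f1 P t1 Q f2 t2 R <-> iota_tr f1 P t1 Q f2 P t2 R).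
Proof.
  intros _ H1 H2. split.
  - intros [Hk (S&(s2&Ls2&Ks2&Hs2)&(s1&Ls1&Ks1&Hs1))]. split.
    + unfold connected, path. apply rt_step. exists f2, t2. exact H2.
    + eapply core; [exact H1|exact H2|exact Hk|exists f2, s2; split; [exact Ks2|exact Hs2]|exists f1, s1; split; [exact Ks1|exact Hs1]].
  - intros [_ Hi]. split.
    + apply iota_key; auto.
    + eapply fwd; eauto.
Qed.
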